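(* Let $\Theta$ be a finite simple oriented graph with simple cycles $C_1,\ldots,C_k$ ($k\geq 1$) which contains no two different cycles connected by an oriented path, and fix on the free monoid $F$ on $V(\Theta)$ the deg-lex order induced by a vertex order as described in the context. Let $u,v,w\in F$ with $\operatorname{supp}(u),\operatorname{supp}(w)\subseteq V(C_n)$ for some cycle $C_n$, and suppose every word in the family $u^*vw^*=\{u^avw^b: a,b\geq 0\}$ is reduced. Then either $v$ contains a vertex connected by an edge with $C_n$, or this family of words can be expressed as a finite union of sets of the form $pr^*q=\{pr^cq:c\geq0\}$ or $\{p\}$, for some words $p,q,r\in F$.
   Context: $\mathrm{HK}_\Theta$: generated by vertices $x$ with $x^2=x$; $xy=yx$ if $x,y$ not joined by an edge; $xyx=yxy=xy$ if $x\to y$. The support $\operatorname{supp}(w)$ is the set of letters occurring in $w$. Maximal cycle-reachable subgraph $\Theta'$: full subgraph on all cycle vertices and all vertices joined to some cycle by an oriented path. For a non-cycle vertex $x$ of $\Theta'$, all oriented paths between $x$ and cycles go in the same direction; $k_x$ is the number of oriented paths of length $\geq0$ in $\Theta$ ending at $x$ (if paths go from $x$ into cycles) or beginning at $x$ (if paths go from cycles to $x$). Vertex order: write $C_j$ as $x_{1,j}\to\cdots\to x_{n(j),j}\to x_{1,j}$; on cycle vertices $x_{i,j}<x_{l,m}$ iff $j<m$, or $j=m$ and $i<l$; all cycle vertices are smaller than all non-cycle vertices; on non-cycle vertices of $\Theta'$ any order with $k_x<k_y\Rightarrow y<x$; vertices outside $\Theta'$ ordered arbitrarily (e.g. larger than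 those of $\Theta'$). Reduced word: with $w\nrightarrow t$ meaning $t\notin\operatorname{supp}(w)$ and no $x\in\operatorname{supp}(w)$ has $x\to t$, $t\nrightarrow w$ meaning $t\notin\operatorname{supp}(w)$ and no $y\in\operatorname{supp}(w)$ has $t\to y$, and $t\nleftrightarrow w$ meaning both, a word is reduced if it has no factor $twt$ with $w\nrightarrow t$ or with $t\nrightarrow w$, and no factor $t_1wt_2$ with $t_1>t_2$ and $t_2\nleftrightarrow t_1w$. *)

(* Defs.v *)
From mathcomp Require Import all_boot.
Set Implicit Arguments. Unset Strict Implicit. Unset Printing Implicit Defensive.

(* Oriented graph on a finite vertex type V with edge relation e (e x y : x -> y).
   Words of the free monoid F on V are sequences [seq V]; supp w = letters of w. *)
Section HK.
Variables (V : finType) (e : rel V).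

Definition is_cycle (c : seq V) : bool := (0 < size c) && uniq c && cycle e c.

Definition same_cycle (c d : seq V) : Prop := exists n, d = rot n c.

(* x lies on some simple cycle (a simple cycle has at most #|V| vertices) *)
Definition cycle_vertex (x : V) : bool :=
  [exists n : 'I_#|V|.+1, exists t : n.-tuple V, is_cycle t && (x \in t)].

(* x is a vertex of the maximal cycle-reachable subgraph Theta' *)
Definition in_Theta' (x : V) : Prop :=
  exists y, cycle_vertex y && (connect e x y || connect e y x).

Definition npaths_to (x : V) : nat :=
  \sum_(n < #|V|.+1)
    #|[pred t : n.-tuple V | (0 < n) && uniq t && sorted e t && (last x t == x)]|.
Definition npaths_from (x : V) : nat :=
  \sum_(n < #|V|.+1)
    #|[pred t : n.-tuple V | (0 < n) && uniq t && sorted e t && (head x t == x)]|.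

Definition kval (x : V) : nat :=
  if [exists y, cycle_vertex y && connect e x y] then npaths_to x
  else npaths_from x.

Variable rk : V -> nat. (* vertex order: t1 < t2 iff rk t1 < rk t2 *)

Definition nto_r (w : seq V) (t : V) : bool := (t \notin w) && all (fun x => ~~ e x t) w.
Definition nto_l (t : V) (w : seq V) : bool := (t \notin w) && all (fun y => ~~ e t y) w.
Definition nto_lr (t : V) (w : seq V) : bool := nto_r w t && nto_l t w.

Definition reduced (s : seq V) : Prop :=
  (~ exists a t w b, s = a ++ t :: w ++ t :: b /\ (nto_r w t || nto_l t w)) /\
  (~ exists a t1 w t2 b, s = a ++ t1 :: w ++ t2 :: b /\
        rk t2 < rk t1 /\ nto_lr t2 (t1 :: w)).

End HK.

Definition wpow (T : Type) (u : seq T) (a : nat) : seq T := flatten (nseq a u).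

(* Main.v *)
Require Import Defs.
From mathcomp Require Import all_boot zify.

Section Aux.
Variables (V : finType) (e : rel V) (rk : V -> nat).

Definition proj (x y : V) (s : seq V) := filter (fun z => (z == x) || (z == y)) s.
Definition R1 (s : seq V) : Prop :=
  ~ exists a t w b, s = a ++ t :: w ++ t :: b /\ (nto_r e w t || nto_l e t w).
Definition R2 (s : seq V) : Prop := ~ exists a t1 w t2 b,
  s = a ++ t1 :: w ++ t2 :: b /\ rk t2 < rk t1 /\ nto_lr e t2 (t1 :: w).
Definition dep (x y : V) := (x == y) || e x y || e y x.
Definition neqr : rel V := fun a b => a != b.

Lemma R2_cons a s : R2 (a :: s) -> R2 s.
Proof.
move=> H [A [t1 [w [t2 [b [E HH]]]]]]; apply: H.
by exists (a :: A), t1, w, t2, b; rewrite E.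
Qed.

Lemma first_occ (a : V) s : a \in s -> exists A B, s = A ++ a :: B /\ a \notin A.
Proof.
elim: s => // h s IH; rewrite inE; case: (eqVneq a h) => [-> _ | ne /= Hs].
  by exists [::], s.
have [A [B [E nA]]] := IH Hs; exists (h :: A), B; rewrite E; split => //.
by rewrite inE negb_or ne.
Qed.

Lemma proj_head a z A R : a \notin A -> z \in A -> exists r, proj a z (A ++ R) = z :: r.
Proof.
elim: A => // h A IH; rewrite !inE negb_or => /andP [ah aA].
case: (eqVneq z h) => [<- _ | zh /= zA].
  by rewrite /proj /= eqxx orbT; eexists.
rewrite /proj /= [h == a]eq_sym (negbTE ah) [h == z]eq_sym (negbTE zh) /=; exact: IH.
Qed.

Lemma key a b s1 s2 : injective rk -> a != b -> rk a < rk b -> R2 (b :: s2) ->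
  (forall x y, dep x y -> proj x y (a::s1) = proj x y (b::s2)) -> False.
Proof.
move=> rinj ab ltab R H.
have ain : a \in b :: s2.
  have : a \in proj a a (a :: s1) by rewrite mem_filter eqxx inE eqxx.
  by rewrite H ?/dep ?eqxx // mem_filter => /andP [].
have [A [B [E nA]]] := first_occ _ _ ain.
case: A E nA => [|b' X] /=.
  by case=> Eb; rewrite Eb eqxx in ab.
case=> <- E nA; apply: R; exists [::], b, X, a, B; split; first by rewrite E.
split => //.
have Hz : forall z, z \in b :: X -> ~~ e z a && ~~ e a z.
  move=> z zA; rewrite -negb_or; apply/negP => hz.
  have dz : dep a z by rewrite /dep; case/orP: hz => -> ; rewrite ?orbT.
  have := H a z dz; rewrite E.
  have [r ->] := proj_head a z (b :: X) (a :: B) nA zA.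
  rewrite /proj /= eqxx /= => -[] az.
  by move: nA; rewrite az zA.
rewrite /nto_lr /nto_r /nto_l nA /=.
have /andP [-> ->] := Hz b (mem_head _ _).
rewrite /=; apply/andP; split; apply/allP => z zX;
  by have /andP [] := Hz z (mem_behead (s:=b :: X) zX).
Qed.

Lemma uniqNF s1 s2 : injective rk -> R2 s1 -> R2 s2 ->
  (forall x y, dep x y -> proj x y s1 = proj x y s2) -> s1 = s2.
Proof.
move=> rinj; elim: s1 s2 => [|a s1 IH] [|b s2] // R1' R2' H.
- have := H b b; rewrite /dep eqxx /= => /(_ isT).
  by rewrite /proj /= eqxx.
- have := H a a; rewrite /dep eqxx /= => /(_ isT).
  by rewrite /proj /= eqxx.
case: (eqVneq a b) => [Eab | nab].
  subst b; congr (_ :: _); apply: IH; [exact: R2_cons R1' | exact: R2_cons R2' |].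
  move=> x y dxy; move: (H x y dxy); rewrite /proj /=.
  by case: ifP => // _ [].
case: (ltngtP (rk a) (rk b)) => hr.
- by case: (key a b s1 s2 rinj nab hr R2' H).
- exfalso; apply: (key b a s2 s1 rinj _ hr R1'); first by rewrite eq_sym.
  by move=> x y d; rewrite H.
- by move/rinj: hr => E; rewrite E eqxx in nab.
Qed.

End Aux.

Section Aux2.
Variables (V : finType) (e : rel V).

Lemma filter_cons_split (p : pred V) s z B : filter p s = z :: B ->
  exists X B', s = X ++ z :: B' /\ all (predC p) X /\ filter p B' = B.
Proof.
elim: s => //= h s IH; case: ifP => ph.
- by case=> <- <-; exists [::], s.
- move/IH => [X [B' [E [aX fB]]]]; exists (h :: X), B'.
  by rewrite E /= ph.
Qed.

Lemma filter_split2 (p : pred V) s A z B : filter p s = A ++ z :: z :: B ->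
  exists A' X B', s = A' ++ z :: X ++ z :: B' /\ all (predC p) X.
Proof.
elim: s A => [|h s IH] A /=; first by case: A.
case: ifP => ph.
- case: A => [|a A] /=.
  + case=> Ehz E; have [X [B' [E' [aX _]]]] := filter_cons_split _ _ _ _ E.
    by exists [::], X, B'; rewrite E' Ehz.
  + case=> _ E; have [A' [X [B' [E' aX]]]] := IH _ E.
    by exists (h :: A'), X, B'; rewrite E'.
- move/IH => [A' [X [B' [E' aX]]]]; exists (h :: A'), X, B'.
  by rewrite E'.
Qed.

Lemma not_sorted_adj (r : rel V) s : ~~ sorted r s ->
  exists A a b B, s = A ++ a :: b :: B /\ ~~ r a b.
Proof.
elim: s => // a s IH; case: s IH => // b s IH /=.
case: (boolP (r a b)) => rab /=.
- move=> ns; have [A [x [y [B [E nr]]]]] := IH ns.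
  by exists (a :: A), x, y, B; rewrite E.
- by move=> _; exists [::], a, b, s.
Qed.

Definition CF (c : seq V) := forall x y, x \in c -> y \in c -> e x y -> y = next c x.

Lemma R1_alt c s x : uniq c -> CF c -> {subset s <= c} -> x \in c -> R1 V e s ->
  sorted (neqr V) (proj V x (next c x) s).
Proof.
move=> Uc cf sc xc R; case: (boolP (sorted _ _)) => // ns; exfalso.
have [A [a [b [B [E nr]]]]] := not_sorted_adj _ _ ns.
move: nr; rewrite /neqr negbK => /eqP Eab; subst b.
have ain : (a == x) || (a == next c x).
  have : a \in proj V x (next c x) s by rewrite E mem_cat !inE eqxx orbT.
  by rewrite mem_filter => /andP [].
have [A' [X [B' [E' aX]]]] := filter_split2 _ _ _ _ _ E.
apply: R; exists A', a, X, B'; split => //.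
have Xc : {subset X <= c}.
  by move=> z zX; apply: sc; rewrite E' mem_cat inE mem_cat zX !orbT.
have nX : forall z, z \in X -> (z != x) && (z != next c x).
  by move=> z zX; move/allP: aX => /(_ z zX) /=; rewrite negb_or.
case/orP: ain => /eqP ->.
- apply/orP; right; rewrite /nto_l; apply/andP; split.
    by apply/negP => /nX; rewrite eqxx.
  apply/allP => z zX; apply/negP => exz.
  have := cf _ _ xc (Xc _ zX) exz => Ez.
  by move: (nX z zX); rewrite Ez eqxx andbF.
- apply/orP; left; rewrite /nto_r; apply/andP; split.
    by apply/negP => /nX; rewrite eqxx andbF.
  apply/allP => z zX; apply/negP => ezx.
  have := cf _ _ (Xc _ zX) _ ezx; rewrite mem_next => /(_ xc) Ez.
  have : prev c (next c z) = prev c (next c x) by rewrite Ez.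
  rewrite !prev_next // => Ezx.
  by move: (nX z zX); rewrite Ezx eqxx.
Qed.

End Aux2.

Section Aux3.
Variables (V : finType).

Lemma alt_count (a b : V) s : a != b -> all (mem [:: a; b]) s -> path (neqr V) a s ->
  count_mem a (a :: s) = count_mem b (a :: s) + (last a s == a).
Proof.
elim: s a b => [|h s IH] a b ab /=.
  by move=> _ _; rewrite eqxx (negbTE ab).
move=> /andP [hab als] /andP [ah ps].
have hb : h = b.
  by move: hab; rewrite !inE => /orP [] /eqP // hE; rewrite /neqr hE eqxx in ah.
subst h.
have ba : b != a by rewrite eq_sym.
have als' : all (mem [:: b; a]) s.
  by apply/allP => z /(allP als); rewrite !inE orbC.
have := IH b a ba als' ps; rewrite /= !eqxx (negbTE ab) (negbTE ba) => E.
have : last b s \in [:: a; b].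
  move: (mem_last b s); rewrite inE => /orP [/eqP ->|/(allP als) //].
  by rewrite !inE eqxx orbT.
rewrite !inE => /orP [] /eqP El; rewrite El ?eqxx ?(negbTE ab) ?(negbTE ba) /= in E *; lia.
Qed.

Lemma alt_cnt_eq (x y : V) s : x != y -> all (mem [:: x; y]) s ->
  sorted (neqr V) (s ++ s) -> count_mem x s = count_mem y s.
Proof.
case: s => [//|h s] xy /= /andP [hin als']; rewrite cat_path => /andP [ps /= /andP [lh _]].
have lh' : (last h s == h) = false by apply/negbTE.
move: hin; rewrite !inE => /orP [] /eqP Eh; subst h.
- have := alt_count x y s xy als' ps; rewrite lh' addn0 => E; exact: E.
- have yx : y != x by rewrite eq_sym.
  have als2 : all (mem [:: y; x]) s by apply/allP => z /(allP als'); rewrite !inE orbC.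
  have := alt_count y x s yx als2 ps; rewrite lh' addn0 => E; exact: esym E.
Qed.



Lemma two_elt (x y a a1 b1 : V) : a \in [:: x; y] -> a1 \in [:: x; y] -> b1 \in [:: x; y] ->
  a1 != a -> b1 != a -> a1 = b1.
Proof.
by rewrite !inE => /orP[]/eqP-> /orP[]/eqP-> /orP[]/eqP->; rewrite ?eqxx.
Qed.

Lemma alt_eq (x y : V) s t : all (mem [:: x; y]) s -> all (mem [:: x; y]) t ->
  sorted (neqr V) s -> sorted (neqr V) t -> head x s = head x t -> size s = size t -> s = t.
Proof.
elim: s t => [|a s IH] [|b t] //= /andP [ain als] /andP [bin alt] ss st hd [sz].
subst b; congr (_ :: _); apply: IH => //; try exact: path_sorted ss; try exact: path_sorted st.
case: s t ss st als alt sz => [|a1 s] [|b1 t] //= /andP [h1 _] /andP [h2 _] /andP [a1in _] /andP [b1in _] _.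
by apply: (two_elt x y a) => //; rewrite eq_sym.
Qed.

End Aux3.

Section Aux4.
Variables (V : finType).

Lemma wpowS (s : seq V) n : wpow s n.+1 = s ++ wpow s n. Proof. by []. Qed.
Lemma wpow0 (s : seq V) : wpow s 0 = [::]. Proof. by []. Qed.
Lemma wpow1 (s : seq V) : wpow s 1 = s. Proof. by rewrite wpowS cats0. Qed.
Lemma wpow_nil n : wpow ([::] : seq V) n = [::]. Proof. by elim: n. Qed.
Lemma wpowD (s : seq V) m n : wpow s (m + n) = wpow s m ++ wpow s n.
Proof. by elim: m => //= m IH; rewrite addSn !wpowS IH catA. Qed.
Lemma wpowM (s : seq V) m q : wpow s (m * q) = wpow (wpow s m) q.
Proof. elim: q => [|q IH]; first by rewrite muln0. by rewrite mulnS wpowD IH. Qed.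
Lemma mem_wpow (s : seq V) n z : z \in wpow s n -> z \in s.
Proof. elim: n => // n IH; rewrite wpowS mem_cat => /orP [//|]; exact: IH. Qed.
Lemma proj_wpow x y (s : seq V) n : proj V x y (wpow s n) = wpow (proj V x y s) n.
Proof. elim: n => // n IH; by rewrite !wpowS /proj filter_cat -IH. Qed.
Lemma count_wpow (p : pred V) s n : count p (wpow s n) = n * count p s.
Proof. elim: n => // n IH; by rewrite wpowS count_cat IH mulSn. Qed.

Lemma size_proj (x y : V) s : x != y -> size (proj V x y s) = count_mem x s + count_mem y s.
Proof.
move=> xy; elim: s => //= h s IH; case: (eqVneq h x) => [->|hx] /=.
  by rewrite IH ?eqxx (negbTE xy) /=; lia.
by case: (eqVneq h y) => /= _; rewrite IH; lia.
Qed.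

Lemma count_projl (x y : V) s : count_mem x (proj V x y s) = count_mem x s.
Proof. rewrite /proj count_filter; apply: eq_count => z /=; by case: (z == x). Qed.
Lemma count_projr (x y : V) s : count_mem y (proj V x y s) = count_mem y s.
Proof. rewrite /proj count_filter; apply: eq_count => z /=; by case: (z == y); rewrite ?orbT ?andbF. Qed.

Lemma all_proj (x y : V) s : all (mem [:: x; y]) (proj V x y s).
Proof. by apply/allP => z; rewrite mem_filter !inE => /andP []. Qed.

Lemma proj_out (c : seq V) x y s : {subset s <= c} -> x \notin c -> proj V x y s = proj V y y s.
Proof.
move=> sc xc; apply: eq_in_filter => z /sc zc.
have -> : (z == x) = false by apply/negbTE; apply: contraNneq xc => <-.
by rewrite orbb.
Qed.

Lemma proj_single (y : V) s : proj V y y s = nseq (count_mem y s) y.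
Proof.
elim: s => //= h s IH; rewrite orbb; case: (eqVneq h y) => [->|] /=; by rewrite IH.
Qed.

Lemma head_cat (d : V) s t : s != [::] -> head d (s ++ t) = head d s.
Proof. by case: s. Qed.

End Aux4.

Section Aux5.
Variables (V : finType) (e : rel V).

Lemma chordfree c : (forall x, ~~ e x x) -> is_cycle e c ->
  (forall d, is_cycle e d -> (exists2 z, z \in c & z \in d) -> same_cycle c d) -> CF V e c.
Proof.
move=> irr cc NP x y xc yc exy.
have /andP [/andP [sz Uc] cyc] := cc.
set i := index y c.
have Er : rot i c = y :: (drop i.+1 c ++ take i c).
  by rewrite /rot (drop_nth y) ?index_mem // nth_index.
set r' := drop i.+1 c ++ take i c.
have xy : x != y by apply: contraNneq (irr x) => Exy; rewrite Exy in exy *.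
have xr' : x \in r'.
  by move: xc; rewrite -(mem_rot i) Er inE (negbTE xy).
have Ur : uniq (y :: r') by rewrite -Er rot_uniq.
have cr : cycle e (y :: r') by rewrite -Er rot_cycle.
set j := index x r'.
have jlt : j < size r' by rewrite index_mem.
have pr : path e y r' by move: cr => /= ; rewrite rcons_path => /andP [].
have tk : take j.+1 r' = rcons (take j r') x by rewrite (take_nth y) // nth_index.
have dcyc : is_cycle e (y :: take j.+1 r').
  rewrite /is_cycle /=; apply/andP; split.
    move: Ur => /= /andP [yr Ur']; rewrite take_uniq // andbT.
    by apply: contra yr => /mem_take.
  rewrite rcons_path tk last_rcons exy andbT -tk.
  by move: pr; rewrite -{1}(cat_take_drop j.+1 r') cat_path => /andP [].
have [n En] := NP _ dcyc (ex_intro2 _ _ y yc (mem_head _ _)).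
have : size (y :: take j.+1 r') = size c by rewrite En size_rot.
have szc : size c = (size r').+1 by rewrite -(size_rot i c) Er.
rewrite szc /= size_take => E.
have Ej : j.+1 = size r' by move: E; case: ltnP => ? E; lia.
rewrite -(next_rot i Uc) Er next_nth -Er mem_rot xc Er /= eq_sym (negbTE xy) -/r' -/j.
by rewrite Ej nth_default.
Qed.

Lemma next_closed c (P : pred V) d : uniq c -> (forall x, x \in c -> P x -> P (next c x)) ->
  P (nth d c 0) -> forall x, x \in c -> P x.
Proof.
case: c => [//|h c'] Uc Hn P0 x xc.
have H : forall i, i < (size c').+1 -> P (nth h (h :: c') i).
  elim => [|i IH] lt; first exact: P0.
  have lt' : i < (size c').+1 by lia.
  have := Hn _ (mem_nth h (s:=h :: c') lt') (IH lt').
  by rewrite next_nth mem_nth // index_uniq.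
by rewrite -(nth_index h xc); apply: H; rewrite -[(size c').+1]/(size (h :: c')) index_mem.
Qed.

Lemma cycle_vertex_in c x : is_cycle e c -> x \in c -> cycle_vertex e x.
Proof.
move=> cc xc; have /andP [/andP [_ Uc] _] := cc.
have sz : size c < #|V|.+1.
  by rewrite ltnS -(card_uniqP Uc) max_card.
apply/existsP; exists (Ordinal sz); apply/existsP; exists (in_tuple c).
by rewrite cc xc.
Qed.

End Aux5.
Theorem lemma3p3
  (V : finType) (e : rel V)
  (* finite simple oriented graph *)
  (e_irr : forall x, ~~ e x x)
  (e_or : forall x y, e x y -> ~~ e y x)
  (* cs = [C_1; ...; C_k] : the simple cycles, k >= 1 *)
  (cs : seq (seq V))
  (cs_ne : 0 < size cs)
  (cs_cyc : forall c, c \in cs -> is_cycle e c)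
  (cs_all : forall c, is_cycle e c -> exists2 d, d \in cs & same_cycle d c)
  (cs_diff : forall j m, j < m < size cs -> ~ same_cycle (nth [::] cs j) (nth [::] cs m))
  (* no two different cycles connected by an oriented path *)
  (no_path : forall c d x y, is_cycle e c -> is_cycle e d -> x \in c -> y \in d ->
      connect e x y -> same_cycle c d)
  (* the vertex order, given by an injective rank *)
  (rk : V -> nat) (rk_inj : injective rk)
  (ord_cyc1 : forall j m x y, j < m -> x \in nth [::] cs j -> y \in nth [::] cs m ->
      rk x < rk y)
  (ord_cyc2 : forall c x i l, c \in cs -> i < l < size c ->
      rk (nth x c i) < rk (nth x c l))
  (ord_cyc3 : forall x y, cycle_vertex e x -> ~~ cycle_vertex e y -> rk x < rk y)
  (ord_k : forall x y, ~~ cycle_vertex e x -> ~~ cycle_vertex e y ->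
      in_Theta' e x -> in_Theta' e y -> kval e x < kval e y -> rk y < rk x)
  (* the words *)
  (u v w : seq V) (c : seq V) (c_in : c \in cs)
  (su : {subset u <= c}) (sw : {subset w <= c})
  (red : forall a b, reduced e rk (wpow u a ++ v ++ wpow w b)) :
  (exists2 x, x \in v & exists2 y, y \in c & e x y || e y x) \/
  (exists (prq : seq (seq V * seq V * seq V)) (ps : seq (seq V)),
     forall s, (exists a b, s = wpow u a ++ v ++ wpow w b) <->
       ((exists2 t, t \in prq & exists n, s = t.1.1 ++ wpow t.1.2 n ++ t.2)
        \/ s \in ps)).
Proof.
have cc := cs_cyc c c_in.
have /andP [/andP [szc Uc] cycc] := cc.
have NP : forall d, is_cycle e d -> (exists2 z, z \in c & z \in d) -> same_cycle c d.
  by move=> d dc [z zc zd]; exact: (no_path c d z z cc dc zc zd (connect0 e z)).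
have cf := chordfree V e c e_irr cc NP.
have nxt : forall x, x \in c -> e x (next c x) := fun x xc => next_cycle cycc xc.
case: (boolP [exists x, (x \in v) && [exists y, (y \in c) && (e x y || e y x)]]) =>
  [/existsP [x /andP [xv /existsP [y /andP [yc exy]]]] | nH].
  by left; exists x => //; exists y.
have H : forall x y, x \in v -> y \in c -> ~~ e x y && ~~ e y x.
  move=> x y xv yc; rewrite -negb_or; apply/negP => exy; move/negP: nH; apply.
  by apply/existsP; exists x; rewrite xv; apply/existsP; exists y; rewrite yc.
right.
case: u su red => [|u0 u1] su red.
  exists [:: (v, w, [::])], [::] => s; split.
    by move=> [a [b ->]]; left; exists (v, w, [::]); rewrite ?mem_head //; exists b; rewrite wpow_nil /= cats0.
  case=> [[t] | //]; rewrite inE => /eqP -> [n ->] /=.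
  by exists 0, n; rewrite cats0.
case: w sw red => [|w0 w1] sw red.
  exists [:: ([::], u0 :: u1, v)], [::] => s; split.
    by move=> [a [b ->]]; left; exists ([::], u0 :: u1, v); rewrite ?mem_head //; exists a; rewrite wpow_nil /= cats0.
  case=> [[t] | //]; rewrite inE => /eqP -> [n ->] /=.
  by exists n, 0; rewrite wpow0 cats0.
have vc : forall z, z \in v -> z \notin c.
  move=> z zv; apply/negP => zc; have := H z (next c z) zv; rewrite mem_next zc.
  by move=> /(_ isT) /andP [/negP ne _]; apply: ne; apply: nxt.
clear nH; case: v H vc red => [|v0 v1] H vc red; last first.
  exfalso.
  have r2 := (red 1 1).2; rewrite !wpow1 in r2.
  case/lastP E: (u0 :: u1) => [//|u' t].
  have tc : t \in c by apply: su; rewrite E mem_rcons mem_head.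
  have w0c : w0 \in c by apply: sw; rewrite mem_head.
  have v0c := vc v0 (mem_head _ _).
  have h1 : ~~ (rk v0 < rk t).
    apply/negP => lt; apply: r2; exists u', t, [::], v0, (v1 ++ w0 :: w1); split.
      by rewrite E cat_rcons.
    split => //; rewrite /nto_lr /nto_r /nto_l /= !inE.
    have /andP [-> ->] := H v0 t (mem_head _ _) tc.
    by have -> : (v0 == t) = false by apply/negbTE; apply: contraNneq v0c => ->.
  have h2 : ~~ (rk w0 < rk v0).
    apply/negP => lt; apply: r2; exists (u0 :: u1), v0, v1, w0, w1; split => //.
    split => //; rewrite /nto_lr /nto_r /nto_l.
    have -> : w0 \notin v0 :: v1 by apply/negP => /vc; rewrite w0c.
    rewrite !andTb; apply/andP; split; apply/allP => z zv; have /andP [h3 h4] := H z w0 zv w0c; by rewrite ?h3 ?h4.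
  rewrite -leqNgt in h1; rewrite -leqNgt in h2.
  have cvw0 := cycle_vertex_in V e c w0 cc w0c.
  case: (boolP (cycle_vertex e v0)) => cv; last first.
    by have := ord_cyc3 w0 v0 cvw0 cv => lt; rewrite leqNgt lt in h2.
  move/existsP: cv => [n /existsP [tt /andP [ttc v0t]]].
  have [d din [n' En']] := cs_all tt ttc.
  have v0d : v0 \in d by rewrite -(mem_rot n') -En'.
  have Ed : nth [::] cs (index d cs) = d by rewrite nth_index.
  have Ec : nth [::] cs (index c cs) = c by rewrite nth_index.
  case: (ltngtP (index d cs) (index c cs)) => hj.
  - have := ord_cyc1 _ _ v0 t hj; rewrite Ed Ec => /(_ v0d tc) lt; by rewrite leqNgt lt in h1.
  - have := ord_cyc1 _ _ w0 v0 hj; rewrite Ed Ec => /(_ w0c v0d) lt; by rewrite leqNgt lt in h2.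
  - by move: v0c; rewrite -Ec -hj Ed v0d.
set u := u0 :: u1 in su red *; set w := w0 :: w1 in sw red *.
have sub_u : forall a, {subset wpow u a <= c} by move=> a z /mem_wpow; apply: su.
have sub_w : forall a, {subset wpow w a <= c} by move=> a z /mem_wpow; apply: sw.
have Ru : forall a, R1 V e (wpow u a) /\ R2 V e rk (wpow u a).
  by move=> a; have := red a 0; rewrite /= cats0 => -[r1 r2]; split; [exact r1 | exact r2].
have Rw : forall b, R1 V e (wpow w b) /\ R2 V e rk (wpow w b).
  by move=> b; have := red 0 b; rewrite /= => -[r1 r2]; split; [exact r1 | exact r2].
have Ruw : R1 V e (u ++ w).
  by have := red 1 1; rewrite !wpow1 cat0s => -[r1 r2]; exact r1.
have Ruu : R1 V e (u ++ u).
  by have := (Ru 2).1; rewrite !wpowS wpow0 cats0.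
have sub_uw : {subset u ++ w <= c} by move=> z; rewrite mem_cat => /orP [/su|/sw].
have sub_uu : {subset u ++ u <= c} by move=> z; rewrite mem_cat => /orP [/su|/su].
have xnx : forall x, x \in c -> x != next c x.
  move=> x xc; apply: contraNneq (e_irr x) => E; rewrite {2}E; exact: nxt.
have uniform : forall z, {subset z <= c} -> R1 V e (z ++ z) -> forall x, x \in c ->
    count_mem x z = count_mem (nth x c 0) z.
  move=> z sz Rz x xc.
  have P := next_closed V c (fun y => count_mem y z == count_mem (nth x c 0) z) x Uc.
  apply/eqP; apply: P => //= y yc /eqP <-; apply/eqP; apply/esym.
  have szz : {subset z ++ z <= c} by move=> q; rewrite mem_cat => /orP [/sz|/sz].
  have al := R1_alt V e c (z ++ z) y Uc cf szz yc Rz.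
  rewrite /proj filter_cat -/(proj V y (next c y) z) in al.
  have := alt_cnt_eq V y (next c y) _ (xnx y yc) (all_proj V _ _ _) al.
  by rewrite count_projl count_projr.
set x0 := nth u0 c 0.
have uniform' : forall z, {subset z <= c} -> R1 V e (z ++ z) -> forall x, x \in c ->
    count_mem x z = count_mem x0 z.
  by move=> z sz Rz x xc; rewrite (uniform z sz Rz x xc) /x0 (set_nth_default u0 x szc).
set k := count_mem x0 u.
set m := count_mem x0 w.
have cu : forall x, x \in c -> count_mem x u = k by move=> x; apply: uniform' => //.
have cw : forall x, x \in c -> count_mem x w = m.
  have Rww : R1 V e (w ++ w) by have := (Rw 2).1; rewrite !wpowS wpow0 cats0.
  by move=> x; apply: uniform' => //.
have kp : 0 < k by rewrite -(cu u0 (su _ (mem_head _ _))) /= eqxx.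
have mp : 0 < m by rewrite -(cw w0 (sw _ (mem_head _ _))) /= eqxx.
have cntE : forall x, count_mem x (wpow u m) = count_mem x (wpow w k).
  move=> x; rewrite !count_wpow; case xc: (x \in c).
    by rewrite cu // cw // mulnC.
  have hu : x \notin u by apply/negP => /su; rewrite xc.
  have hw : x \notin w by apply/negP => /sw; rewrite xc.
  by move/count_memPn: hu => ->; move/count_memPn: hw => ->; rewrite !muln0.
have projC : forall x y s, proj V x y s = proj V y x s.
  by move=> x y s; apply: eq_filter => q; rewrite orbC.
have altE : forall x, x \in c ->
    proj V x (next c x) (wpow u m) = proj V x (next c x) (wpow w k).
  move=> x xc; set y := next c x.
  have xy := xnx x xc.
  have pne : forall z q, 0 < q -> (forall x, x \in c -> count_mem x z = q) ->
      proj V x y z != [::].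
    move=> z q qp cz; apply/eqP => E; have := count_projl V x y z.
    by rewrite E /= cz // => q0; rewrite -q0 in qp.
  have hd : forall z q, 0 < q -> proj V x y z != [::] -> head x (proj V x y (wpow z q)) = head x (proj V x y z).
    by move=> z q qp zn; rewrite proj_wpow; case: q qp => // q _; rewrite wpowS head_cat.
  apply: (alt_eq V x y); [exact: all_proj | exact: all_proj | | | |].
  - exact: (R1_alt V e c (wpow u m) x Uc cf (sub_u m) xc (Ru m).1).
  - exact: (R1_alt V e c (wpow w k) x Uc cf (sub_w k) xc (Rw k).1).
  - rewrite (hd u m mp (pne u k kp cu)) (hd w k kp (pne w m mp cw)).
    have al1 := R1_alt V e c (u ++ u) x Uc cf sub_uu xc Ruu.
    have al2 := R1_alt V e c (u ++ w) x Uc cf sub_uw xc Ruw.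
    rewrite /proj !filter_cat -!/(proj V x y _) -/y in al1 al2.
    move: (pne u k kp cu) (pne w m mp cw) al1 al2 (all_proj V x y u) (all_proj V x y w).
    case: (proj V x y u) => [//|a s1] _; case: (proj V x y w) => [//|b t1] _ /=.
    rewrite !cat_path /= => /andP [_ /andP [l1 _]] /andP [_ /andP [l2 _]] /andP [ain as1] /andP [bin _].
    have lin : last a s1 \in [:: x; y].
      by move: (mem_last a s1); rewrite inE => /orP [/eqP ->|/(allP as1)].
    by apply: (two_elt V x y (last a s1)) => //; rewrite eq_sym.
  - by rewrite !size_proj // !cntE.
have EQ : wpow u m = wpow w k.
  apply: (uniqNF V e rk _ _ rk_inj (Ru m).2 (Rw k).2) => x y dxy.
  case xc: (x \in c).
  - case yc: (y \in c).
    + move: dxy; rewrite /dep => /orP [/orP [/eqP <- | exy] | eyx].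
      * by rewrite !proj_single cntE.
      * by rewrite (cf x y xc yc exy); apply: altE.
      * by rewrite projC [proj V x y (wpow w k)]projC (cf y x yc xc eyx); apply: altE.
    + rewrite projC [proj V x y (wpow w k)]projC.
      rewrite (proj_out V c y x (wpow u m)) ?yc // (proj_out V c y x (wpow w k)) ?yc //.
      by rewrite !proj_single cntE.
  - rewrite (proj_out V c x y (wpow u m)) ?xc // (proj_out V c x y (wpow w k)) ?xc //.
    by rewrite !proj_single cntE.
exists [seq (wpow u i, w, [::]) | i <- iota 0 m], [::] => s; split.
- move=> [a [b ->]]; left; exists (wpow u (a %% m), w, [::]).
    by apply: map_f; rewrite mem_iota /= add0n ltn_pmod.
  exists (k * (a %/ m) + b) => /=.
  rewrite {1}(divn_eq a m) addnC wpowD mulnC wpowM EQ -wpowM wpowD cats0 catA.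
  by [].
- case=> [[t /mapP [i _ ->] [n ->]] | //] /=.
  by exists i, n; rewrite cats0.
Qed.
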